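(* Let $G$ be a finite group, $k$ a field of characteristic $p$, and $M$ an indecomposable $kG$-module. If $M\otimes M\cong M\oplus X$ for some algebraic $kG$-module $X$, then $M$ is algebraic.
   Context: A $kG$-module $M$ is algebraic if only finitely many isomorphism classes of indecomposable modules occur as direct summands of the tensor powers $M^{\otimes n}$, $n\geq 1$. *)

(* Defs.v *)
From HB Require Import structures.
From mathcomp Require Import all_boot all_order all_algebra all_fingroup.
From mathcomp Require Import mxrepresentation.
From Stdlib Require List.
Set Implicit Arguments. Unset Strict Implicit. Unset Printing Implicit Defensive.
Import GRing.Theory.
Local Open Scope ring_scope.

Section TensorSum.
Variables (F : fieldType) (gT : finGroupType) (G : {group gT}).

(* The map X |-> A^T X B on d1 x d2 matrices: under the identification
   k^d1 (x) k^d2 = 'M_(d1,d2), v (x) w |-> v^T w, this is (v (x) w) |-> vA (x) wB. *)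
Definition tens_map m1 n1 m2 n2 (A : 'M[F]_(m1, n1)) (B : 'M[F]_(m2, n2))
  (X : 'M[F]_(m1, m2)) : 'M[F]_(n1, n2) := A^T *m X *m B.

Lemma tens_map_is_linear m1 n1 m2 n2 (A : 'M[F]_(m1, n1)) (B : 'M[F]_(m2, n2)) :
  linear (tens_map A B).
Proof.
by move=> a X Y; rewrite /tens_map mulmxDr mulmxDl -scalemxAr -scalemxAl.
Qed.

Lemma tens_mapE m1 n1 m2 n2 (A : 'M[F]_(m1, n1)) (B : 'M[F]_(m2, n2)) X :
  tens_map A B X = A^T *m X *m B.
Proof. by []. Qed.

HB.instance Definition _ m1 n1 m2 n2 (A : 'M[F]_(m1, n1)) (B : 'M[F]_(m2, n2)) :=
  GRing.isLinear.Build F _ _ _ (tens_map A B) (tens_map_is_linear A B).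

(* Kronecker (tensor) product of matrices, acting on row vectors of
   length m1 * m2 (= mxvec of m1 x m2 matrices). *)
Definition tens_mx m1 n1 m2 n2 (A : 'M[F]_(m1, n1)) (B : 'M[F]_(m2, n2)) :
  'M[F]_(m1 * m2, n1 * n2) := lin_mx (tens_map A B).

Lemma tens_mx_mul m1 n1 p1 m2 n2 p2 (A : 'M[F]_(m1, n1)) (B : 'M[F]_(m2, n2))
  (C : 'M[F]_(n1, p1)) (D : 'M[F]_(n2, p2)) :
  tens_mx (A *m C) (B *m D) = tens_mx A B *m tens_mx C D.
Proof.
apply/row_matrixP=> i; rewrite !rowE -(vec_mxK (delta_mx 0 i)) mulmxA.
rewrite /tens_mx !mul_vec_lin; congr mxvec; set X := vec_mx _.
transitivity ((A *m C)^T *m X *m (B *m D)); first by [].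
transitivity (C^T *m (A^T *m X *m B) *m D); last by [].
by rewrite trmx_mul !mulmxA.
Qed.

Lemma tens_mx1 m1 m2 : tens_mx (1%:M : 'M[F]_m1) (1%:M : 'M[F]_m2) = 1%:M.
Proof.
apply/row_matrixP=> i; rewrite !rowE -(vec_mxK (delta_mx 0 i)) /tens_mx.
rewrite mul_vec_lin mulmx1; congr mxvec; set X := vec_mx _.
transitivity ((1%:M : 'M[F]_m1)^T *m X *m 1%:M); first by [].
by rewrite trmx1 mul1mx mulmx1.
Qed.

Definition tprod_mx d1 d2 (r1 : mx_representation F G d1)
  (r2 : mx_representation F G d2) (x : gT) : 'M[F]_(d1 * d2) :=
  tens_mx (r1 x) (r2 x).

Lemma tprod_mx_repr d1 d2 (r1 : mx_representation F G d1)
  (r2 : mx_representation F G d2) : mx_repr G (tprod_mx r1 r2).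
Proof.
split; first by rewrite /tprod_mx !repr_mx1 tens_mx1.
by move=> x y Gx Gy; rewrite /tprod_mx !repr_mxM // tens_mx_mul.
Qed.

Definition tprod_repr d1 d2 (r1 : mx_representation F G d1)
  (r2 : mx_representation F G d2) : mx_representation F G (d1 * d2) :=
  MxRepresentation (tprod_mx_repr r1 r2).

Definition dsum_mx d1 d2 (r1 : mx_representation F G d1)
  (r2 : mx_representation F G d2) (x : gT) : 'M[F]_(d1 + d2) :=
  block_mx (r1 x) 0 0 (r2 x).

Lemma dsum_mx_repr d1 d2 (r1 : mx_representation F G d1)
  (r2 : mx_representation F G d2) : mx_repr G (dsum_mx r1 r2).
Proof.
split; first by rewrite /dsum_mx !repr_mx1 -scalar_mx_block.
move=> x y Gx Gy; rewrite /dsum_mx !repr_mxM // mulmx_block.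
by rewrite !mulmx0 !mul0mx !addr0 !add0r.
Qed.

Definition dsum_repr d1 d2 (r1 : mx_representation F G d1)
  (r2 : mx_representation F G d2) : mx_representation F G (d1 + d2) :=
  MxRepresentation (dsum_mx_repr r1 r2).

Fixpoint tpow_dim (d n : nat) : nat :=
  match n with 0 => d | n'.+1 => (d * tpow_dim d n')%N end.

(* tpow_repr r n is the (n+1)-st tensor power M^{(x)(n+1)}. *)
Fixpoint tpow_repr d (r : mx_representation F G d) (n : nat) :
  mx_representation F G (tpow_dim d n) :=
  match n with
  | 0 => r
  | n'.+1 => tprod_repr r (tpow_repr r n')
  end.

Definition mx_indecomposable d (r : mx_representation F G d) : Prop :=
  (0 < d)%N /\
  forall U V : 'M[F]_d, mxmodule r U -> mxmodule r V ->
    mxdirect (U + V) -> (U + V :=: 1%:M)%MS -> U = 0 \/ V = 0.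

Definition is_dsummand d (W : mx_representation F G d) e
  (N : mx_representation F G e) : Prop :=
  exists (f : nat) (Y : mx_representation F G f), mx_rsim N (dsum_repr W Y).

Definition mx_algebraic d (r : mx_representation F G d) : Prop :=
  exists S : seq {e : nat & mx_representation F G e},
    forall (n : nat) (e : nat) (W : mx_representation F G e),
      mx_indecomposable W -> is_dsummand W (tpow_repr r n) ->
      exists2 s, List.In s S & mx_rsim W (projT2 s).
End TensorSum.

(* Main.v *)
Require Import Defs.
From HB Require Import structures.
From mathcomp Require Import all_boot all_order all_algebra all_fingroup.
From mathcomp Require Import mxrepresentation.
From Stdlib Require Import Classical.
From Stdlib Require List.
Set Implicit Arguments. Unset Strict Implicit. Unset Printing Implicit Defensive.
Import GRing.Theory.
Local Open Scope ring_scope.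

Section S1.
Variables (F : fieldType) (gT : finGroupType) (G : {group gT}).
Local Notation rep := (mx_representation F G).

Definition rhom n1 n2 (r1 : rep n1) (r2 : rep n2) (f : 'M[F]_(n1, n2)) :=
  forall x, x \in G -> r1 x *m f = f *m r2 x.
Definition rsub n1 n2 (r1 : rep n1) (r2 : rep n2) :=
  exists f g, [/\ rhom r1 r2 f, rhom r2 r1 g & f *m g = 1%:M].
Definition riso n1 n2 (r1 : rep n1) (r2 : rep n2) :=
  exists f g, [/\ rhom r1 r2 f, rhom r2 r1 g, f *m g = 1%:M & g *m f = 1%:M].

Lemma rhom_mul n1 n2 n3 (r1 : rep n1) (r2 : rep n2) (r3 : rep n3) f g :
  rhom r1 r2 f -> rhom r2 r3 g -> rhom r1 r3 (f *m g).
Proof. by move=> hf hg x Gx; rewrite mulmxA hf // -!mulmxA hg. Qed.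

Lemma rhom_add n1 n2 (r1 : rep n1) (r2 : rep n2) f g :
  rhom r1 r2 f -> rhom r1 r2 g -> rhom r1 r2 (f + g).
Proof. by move=> hf hg x Gx; rewrite mulmxDr mulmxDl hf // hg. Qed.

Lemma rhom_1 n (r : rep n) : rhom r r 1%:M.
Proof. by move=> x Gx; rewrite mulmx1 mul1mx. Qed.

Lemma rhom_opp n1 n2 (r1 : rep n1) (r2 : rep n2) f :
  rhom r1 r2 f -> rhom r1 r2 (- f).
Proof. by move=> hf x Gx; rewrite mulmxN mulNmx hf. Qed.

Lemma rhom_inv n (r : rep n) f : rhom r r f -> f \in unitmx -> rhom r r (invmx f).
Proof.
move=> hf uf x Gx.
rewrite -[r x *m _]mul1mx -(mulVmx uf) -!mulmxA; congr (_ *m _).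
by rewrite !mulmxA -hf // -!mulmxA mulmxV // mulmx1.
Qed.

Lemma rsub_refl n (r : rep n) : rsub r r.
Proof. by exists 1%:M, 1%:M; split; rewrite ?mulmx1 //; apply: rhom_1. Qed.

Lemma rsub_trans n1 n2 n3 (r1 : rep n1) (r2 : rep n2) (r3 : rep n3) :
  rsub r1 r2 -> rsub r2 r3 -> rsub r1 r3.
Proof.
move=> [f [g [hf hg fg]]] [f' [g' [hf' hg' fg']]].
exists (f *m f'), (g' *m g); split; [exact: rhom_mul hf hf' | exact: rhom_mul hg' hg |].
by rewrite mulmxA -(mulmxA f) fg' mulmx1.
Qed.

Lemma riso_sub n1 n2 (r1 : rep n1) (r2 : rep n2) : riso r1 r2 -> rsub r1 r2.
Proof. by move=> [f [g [hf hg fg gf]]]; exists f, g. Qed.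

Lemma riso_sym n1 n2 (r1 : rep n1) (r2 : rep n2) : riso r1 r2 -> riso r2 r1.
Proof. by move=> [f [g [hf hg fg gf]]]; exists g, f. Qed.

Lemma riso_refl n (r : rep n) : riso r r.
Proof. by exists 1%:M, 1%:M; split; rewrite ?mulmx1 //; apply: rhom_1. Qed.

Lemma riso_trans n1 n2 n3 (r1 : rep n1) (r2 : rep n2) (r3 : rep n3) :
  riso r1 r2 -> riso r2 r3 -> riso r1 r3.
Proof.
move=> [f [g [hf hg fg gf]]] [f' [g' [hf' hg' fg' gf']]].
exists (f *m f'), (g' *m g); split; [exact: rhom_mul hf hf' | exact: rhom_mul hg' hg | |].
  by rewrite mulmxA -(mulmxA f) fg' mulmx1.
by rewrite mulmxA -(mulmxA g') gf mulmx1.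
Qed.

Lemma mul1_rank m n (A : 'M[F]_(m, n)) B : A *m B = 1%:M -> (m <= n)%N /\ row_free A.
Proof.
move=> AB; have h1 : (m <= \rank A)%N.
  by rewrite -{1}(mxrank1 F m) -AB mxrankM_maxl.
split; first by apply: leq_trans h1 (rank_leq_col _).
by rewrite /row_free eqn_leq rank_leq_row h1.
Qed.

Lemma riso_rsim n1 n2 (r1 : rep n1) (r2 : rep n2) : riso r1 r2 -> mx_rsim r1 r2.
Proof.
move=> [f [g [hf hg fg gf]]].
have [le12 rf] := mul1_rank fg; have [le21 _] := mul1_rank gf.
by exists f => //; apply/eqP; rewrite eqn_leq le12.
Qed.

Lemma rsim_iso n1 n2 (r1 : rep n1) (r2 : rep n2) : mx_rsim r1 r2 -> riso r1 r2.
Proof.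
case=> B e12; subst n2 => rfB hB.
have uB : B \in unitmx by rewrite -row_free_unit.
exists B, (invmx B); split.
- exact: hB.
- move=> x Gx; rewrite -[r2 x *m _]mul1mx -(mulVmx uB) -!mulmxA; congr (_ *m _).
  by rewrite !mulmxA -hB // -!mulmxA mulmxV // mulmx1.
- exact: mulmxV.
- exact: mulVmx.
Qed.

End S1.

Section S2.
Variables (F : fieldType) (gT : finGroupType) (G : {group gT}).
Local Notation rep := (mx_representation F G).

Lemma entry_row m n (A : 'M[F]_(m, n)) i j : A i j = (delta_mx (0 : 'I_1) i *m A) 0 j.
Proof. by rewrite -rowE mxE. Qed.

Lemma tens_mxE m1 n1 m2 n2 (A : 'M[F]_(m1, n1)) (B : 'M[F]_(m2, n2)) i1 i2 j1 j2 :
  tens_mx A B (mxvec_index i1 i2) (mxvec_index j1 j2) = A i1 j1 * B i2 j2.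
Proof.
rewrite entry_row -mxvec_delta /tens_mx mul_vec_lin mxvecE /=. rewrite /tens_map.
rewrite mxE (bigD1 i2) //= big1 => [|k nk]; last first.
  rewrite mxE big1 ?mul0r // => l _; rewrite !mxE (negbTE nk) andbF mulr0 //.
rewrite addr0 mxE (bigD1 i1) //= big1 => [|l nl]; last by rewrite !mxE (negbTE nl) mulr0.
by rewrite !mxE !eqxx mulr1 addr0.
Qed.

Definition unvec m n (u : 'I_(m * n)) : 'I_m * 'I_n :=
  enum_val (cast_ord (esym (mxvec_cast m n)) u).

Lemma unvecK m n (u : 'I_(m * n)) : mxvec_index (unvec u).1 (unvec u).2 = u.
Proof.
by case/mxvec_indexP: u => i j; rewrite /unvec /mxvec_index cast_ordK enum_rankK.
Qed.

Lemma unvec_idx m n (i : 'I_m) (j : 'I_n) : unvec (mxvec_index i j) = (i, j).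
Proof. by rewrite /unvec /mxvec_index cast_ordK enum_rankK. Qed.

Definition pmx n1 n2 (s : 'I_n1 -> 'I_n2) : 'M[F]_(n1, n2) :=
  \matrix_(i, j) ((s i == j)%:R).

Lemma mul_pmx_l n1 n2 m (s : 'I_n1 -> 'I_n2) (A : 'M[F]_(n2, m)) i j :
  (pmx s *m A) i j = A (s i) j.
Proof.
rewrite mxE (bigD1 (s i)) //= big1 => [|k nk]; last by rewrite mxE eq_sym (negbTE nk) mul0r.
by rewrite mxE eqxx mul1r addr0.
Qed.

Lemma mul_pmx_r n1 n2 m (s : 'I_n1 -> 'I_n2) (t : 'I_n2 -> 'I_n1)
    (A : 'M[F]_(m, n1)) i j :
  cancel s t -> cancel t s -> (A *m pmx s) i j = A i (t j).
Proof.
move=> sK tK; rewrite mxE (bigD1 (t j)) //= big1 => [|k nk].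
  by rewrite mxE tK eqxx mulr1 addr0.
rewrite mxE; case: eqP => [skj|]; last by rewrite mulr0.
by case/eqP: nk; rewrite -skj sK.
Qed.

Lemma reindex_iso n1 n2 (r1 : rep n1) (r2 : rep n2) (s : 'I_n1 -> 'I_n2)
    (t : 'I_n2 -> 'I_n1) :
  cancel s t -> cancel t s ->
  (forall x, x \in G -> forall i k, r1 x i k = r2 x (s i) (s k)) -> riso r1 r2.
Proof.
move=> sK tK hr; exists (pmx s), (pmx t); split.
- move=> x Gx; apply/matrixP=> i j.
  by rewrite (mul_pmx_r _ _ _ sK tK) mul_pmx_l hr // tK.
- move=> x Gx; apply/matrixP=> i j.
  by rewrite (mul_pmx_r _ _ _ tK sK) mul_pmx_l hr // tK.
- apply/matrixP=> i j; rewrite (mul_pmx_r _ _ _ tK sK) !mxE.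
  by rewrite (inj_eq (can_inj sK)).
- apply/matrixP=> i j; rewrite (mul_pmx_r _ _ _ sK tK) !mxE.
  by rewrite (inj_eq (can_inj tK)).
Qed.

Lemma tprodE n1 n2 (A : rep n1) (B : rep n2) x :
  tprod_repr A B x = tens_mx (A x) (B x).
Proof. by []. Qed.

Lemma dsumE n1 n2 (A : rep n1) (B : rep n2) x :
  dsum_repr A B x = block_mx (A x) 0 0 (B x).
Proof. by []. Qed.

Lemma split_lshift m n (i : 'I_m) : split (lshift n i) = inl i.
Proof. exact: (unsplitK (inl _)). Qed.
Lemma split_rshift m n (i : 'I_n) : split (rshift m i) = inr i.
Proof. exact: (unsplitK (inr _)). Qed.

Definition swapi m n (u : 'I_(m * n)) : 'I_(n * m) :=
  mxvec_index (unvec u).2 (unvec u).1.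

Lemma swapiK m n : cancel (@swapi m n) (@swapi n m).
Proof. by move=> u; case/mxvec_indexP: u => i j; rewrite /swapi !unvec_idx. Qed.

Lemma riso_comm n1 n2 (A : rep n1) (B : rep n2) :
  riso (tprod_repr A B) (tprod_repr B A).
Proof.
apply: (reindex_iso (@swapiK n1 n2) (@swapiK n2 n1)) => x Gx i k.
case/mxvec_indexP: i => i1 i2; case/mxvec_indexP: k => k1 k2.
by rewrite !tprodE /swapi !unvec_idx /= !tens_mxE mulrC.
Qed.

Definition assi a b c (u : 'I_(a * (b * c))) : 'I_(a * b * c) :=
  mxvec_index (mxvec_index (unvec u).1 (unvec (unvec u).2).1) (unvec (unvec u).2).2.
Definition assi' a b c (u : 'I_(a * b * c)) : 'I_(a * (b * c)) :=
  mxvec_index (unvec (unvec u).1).1 (mxvec_index (unvec (unvec u).1).2 (unvec u).2).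

Lemma assiK a b c : cancel (@assi a b c) (@assi' a b c).
Proof.
move=> u; case/mxvec_indexP: u => i j; case/mxvec_indexP: j => j k.
by rewrite /assi /assi' !unvec_idx /= ?unvec_idx.
Qed.
Lemma assiK' a b c : cancel (@assi' a b c) (@assi a b c).
Proof.
move=> u; case/mxvec_indexP: u => i k; case/mxvec_indexP: i => i j.
by rewrite /assi /assi' !unvec_idx /= ?unvec_idx.
Qed.

Lemma riso_assoc n1 n2 n3 (A : rep n1) (B : rep n2) (C : rep n3) :
  riso (tprod_repr A (tprod_repr B C)) (tprod_repr (tprod_repr A B) C).
Proof.
apply: (reindex_iso (@assiK n1 n2 n3) (@assiK' n1 n2 n3)) => x Gx i k.
case/mxvec_indexP: i => i1 i; case/mxvec_indexP: i => i2 i3.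
case/mxvec_indexP: k => k1 k; case/mxvec_indexP: k => k2 k3.
by rewrite !tprodE /assi !unvec_idx /= ?unvec_idx /= !tens_mxE mulrA.
Qed.

Definition dli a b c (u : 'I_((a + b) * c)) : 'I_(a * c + b * c) :=
  match split (unvec u).1 with
  | inl i => lshift (b * c) (mxvec_index i (unvec u).2)
  | inr i => rshift (a * c) (mxvec_index i (unvec u).2)
  end.
Definition dli' a b c (v : 'I_(a * c + b * c)) : 'I_((a + b) * c) :=
  match split v with
  | inl w => mxvec_index (lshift b (unvec w).1) (unvec w).2
  | inr w => mxvec_index (rshift a (unvec w).1) (unvec w).2
  end.

Lemma dliK a b c : cancel (@dli a b c) (@dli' a b c).
Proof.
move=> u; case/mxvec_indexP: u => i k; rewrite /dli unvec_idx /=.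
rewrite -[i]splitK; case: (split i) => j /=.
  by rewrite split_lshift /dli' split_lshift /= unvec_idx.
by rewrite split_rshift /dli' split_rshift /= unvec_idx.
Qed.
Lemma dliK' a b c : cancel (@dli' a b c) (@dli a b c).
Proof.
move=> v; rewrite /dli'; case E: (split v) => [w|w]; rewrite /dli unvec_idx /=.
  by rewrite split_lshift unvecK -[v]splitK E.
by rewrite split_rshift unvecK -[v]splitK E.
Qed.

Lemma riso_distl n1 n2 n3 (A : rep n1) (B : rep n2) (C : rep n3) :
  riso (tprod_repr (dsum_repr A B) C)
      (dsum_repr (tprod_repr A C) (tprod_repr B C)).
Proof.
apply: (reindex_iso (@dliK n1 n2 n3) (@dliK' n1 n2 n3)) => x Gx i k.
case/mxvec_indexP: i => i1 i2; case/mxvec_indexP: k => k1 k2.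
rewrite !tprodE !dsumE /dli !unvec_idx /= tens_mxE.
rewrite -[i1]splitK -[k1]splitK.
case: (split i1) => j1; case: (split k1) => l1;
  rewrite /= ?split_lshift ?split_rshift /=;
  rewrite ?block_mxEul ?block_mxEur ?block_mxEdl ?block_mxEdr ?tens_mxE ?mxE ?mul0r //.
Qed.

Definition dri a b c (u : 'I_(a * (b + c))) : 'I_(a * b + a * c) :=
  match split (unvec u).2 with
  | inl i => lshift (a * c) (mxvec_index (unvec u).1 i)
  | inr i => rshift (a * b) (mxvec_index (unvec u).1 i)
  end.
Definition dri' a b c (v : 'I_(a * b + a * c)) : 'I_(a * (b + c)) :=
  match split v with
  | inl w => mxvec_index (unvec w).1 (lshift c (unvec w).2)
  | inr w => mxvec_index (unvec w).1 (rshift b (unvec w).2)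
  end.

Lemma driK a b c : cancel (@dri a b c) (@dri' a b c).
Proof.
move=> u; case/mxvec_indexP: u => k i; rewrite /dri unvec_idx /=.
rewrite -[i]splitK; case: (split i) => j /=.
  by rewrite split_lshift /dri' split_lshift /= unvec_idx.
by rewrite split_rshift /dri' split_rshift /= unvec_idx.
Qed.
Lemma driK' a b c : cancel (@dri' a b c) (@dri a b c).
Proof.
move=> v; rewrite /dri'; case E: (split v) => [w|w]; rewrite /dri unvec_idx /=.
  by rewrite split_lshift unvecK -[v]splitK E.
by rewrite split_rshift unvecK -[v]splitK E.
Qed.

Lemma riso_distr n1 n2 n3 (A : rep n1) (B : rep n2) (C : rep n3) :
  riso (tprod_repr A (dsum_repr B C))
      (dsum_repr (tprod_repr A B) (tprod_repr A C)).
Proof.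
apply: (reindex_iso (@driK n1 n2 n3) (@driK' n1 n2 n3)) => x Gx i k.
case/mxvec_indexP: i => i2 i1; case/mxvec_indexP: k => k2 k1.
rewrite !tprodE !dsumE /dri !unvec_idx /= tens_mxE.
rewrite -[i1]splitK -[k1]splitK.
case: (split i1) => j1; case: (split k1) => l1;
  rewrite /= ?split_lshift ?split_rshift /=;
  rewrite ?block_mxEul ?block_mxEur ?block_mxEdl ?block_mxEdr ?tens_mxE ?mxE ?mulr0 //.
Qed.

Lemma tens_mxDl m1 n1 m2 n2 (A A' : 'M[F]_(m1, n1)) (B : 'M[F]_(m2, n2)) :
  tens_mx (A + A') B = tens_mx A B + tens_mx A' B.
Proof.
apply/matrixP=> i j; case/mxvec_indexP: i => i1 i2; case/mxvec_indexP: j => j1 j2.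
by rewrite [RHS]mxE !tens_mxE mxE mulrDl.
Qed.

Lemma tens_mxDr m1 n1 m2 n2 (A : 'M[F]_(m1, n1)) (B B' : 'M[F]_(m2, n2)) :
  tens_mx A (B + B') = tens_mx A B + tens_mx A B'.
Proof.
apply/matrixP=> i j; case/mxvec_indexP: i => i1 i2; case/mxvec_indexP: j => j1 j2.
by rewrite [RHS]mxE !tens_mxE mxE mulrDr.
Qed.

Lemma rhom_tens n1 n2 n1' n2' (A : rep n1) (B : rep n2) (A' : rep n1') (B' : rep n2') f g :
  rhom A A' f -> rhom B B' g -> rhom (tprod_repr A B) (tprod_repr A' B') (tens_mx f g).
Proof.
by move=> hf hg x Gx; rewrite !tprodE -!tens_mx_mul hf // hg.
Qed.

Lemma riso_tens n1 n2 n1' n2' (A : rep n1) (B : rep n2) (A' : rep n1') (B' : rep n2') :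
  riso A A' -> riso B B' -> riso (tprod_repr A B) (tprod_repr A' B').
Proof.
move=> [f [g [hf hg fg gf]]] [f' [g' [hf' hg' fg' gf']]].
exists (tens_mx f f'), (tens_mx g g'); split; try exact: rhom_tens.
  by rewrite -tens_mx_mul fg fg' tens_mx1.
by rewrite -tens_mx_mul gf gf' tens_mx1.
Qed.

Lemma rsub_tens n1 n2 n1' n2' (A : rep n1) (B : rep n2) (A' : rep n1') (B' : rep n2') :
  rsub A A' -> rsub B B' -> rsub (tprod_repr A B) (tprod_repr A' B').
Proof.
move=> [f [g [hf hg fg]]] [f' [g' [hf' hg' fg']]].
exists (tens_mx f f'), (tens_mx g g'); split; try exact: rhom_tens.
by rewrite -tens_mx_mul fg fg' tens_mx1.
Qed.

Lemma riso_dsum n1 n2 n1' n2' (A : rep n1) (B : rep n2) (A' : rep n1') (B' : rep n2') :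
  riso A A' -> riso B B' -> riso (dsum_repr A B) (dsum_repr A' B').
Proof.
move=> [f [g [hf hg fg gf]]] [f' [g' [hf' hg' fg' gf']]].
exists (block_mx f 0 0 f'), (block_mx g 0 0 g'); split.
- by move=> x Gx; rewrite !dsumE !mulmx_block !mulmx0 !mul0mx !addr0 !add0r hf // hf'.
- by move=> x Gx; rewrite !dsumE !mulmx_block !mulmx0 !mul0mx !addr0 !add0r hg // hg'.
- by rewrite mulmx_block !mulmx0 !mul0mx !addr0 !add0r fg fg' -scalar_mx_block.
- by rewrite mulmx_block !mulmx0 !mul0mx !addr0 !add0r gf gf' -scalar_mx_block.
Qed.

End S2.

Section S3.
Variables (F : fieldType) (gT : finGroupType) (G : {group gT}).
Local Notation rep := (mx_representation F G).

Fixpoint mpow n (u : 'M[F]_n) k : 'M[F]_n :=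
  if k is k'.+1 then u *m mpow u k' else 1%:M.

Lemma mpowSr n (u : 'M[F]_n) k : mpow u k.+1 = mpow u k *m u.
Proof.
elim: k => [|k IH]; first by rewrite /= mulmx1 mul1mx.
by change (u *m mpow u k.+1 = mpow u k.+1 *m u); rewrite {1}IH mulmxA.
Qed.

Lemma mpowD n (u : 'M[F]_n) j k : mpow u (j + k) = mpow u j *m mpow u k.
Proof. by elim: j => [|j IH] /=; rewrite ?mul1mx // IH mulmxA. Qed.

Lemma rhom_mpow n (N : rep n) u k : rhom N N u -> rhom N N (mpow u k).
Proof.
move=> hu; elim: k => [|k IH] /=; first exact: rhom_1.
exact: rhom_mul hu IH.
Qed.

Lemma rank_mpowS n (u : 'M[F]_n) k : (\rank (mpow u k.+1) <= \rank (mpow u k))%N.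
Proof. by apply: mxrankS; rewrite /= submxMl. Qed.

Lemma rank_mpow_stab n (u : 'M[F]_n) k :
  \rank (mpow u k.+1) = \rank (mpow u k) ->
  \rank (mpow u k.+2) = \rank (mpow u k.+1).
Proof.
move=> e.
have s : (mpow u k.+1 <= mpow u k)%MS by rewrite /= submxMl.
have /eqmxP h : (mpow u k.+1 == mpow u k)%MS.
  by rewrite -(mxrank_leqif_eq s).2 e.
by rewrite (mpowSr u k.+1) (eqmxMr u h) -mpowSr.
Qed.

Lemma rank_mpow_prop n (u : 'M[F]_n) j :
  \rank (mpow u j.+1) = \rank (mpow u j) ->
  forall i, \rank (mpow u (j + i).+1) = \rank (mpow u (j + i)).
Proof.
move=> e; elim=> [|i IH]; first by rewrite addn0.
by rewrite addnS; apply: rank_mpow_stab.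
Qed.

Lemma rank_mpow_n n (u : 'M[F]_n) : \rank (mpow u n.+1) = \rank (mpow u n).
Proof.
have key : forall k, (exists2 j, (j < k)%N & \rank (mpow u j.+1) = \rank (mpow u j))
    \/ (\rank (mpow u k) + k <= n)%N.
  elim=> [|k [[j ltjk ej]|IH]]; first by right; rewrite addn0 /= mxrank1.
    by left; exists j => //; apply: ltnW.
  have := rank_mpowS u k; rewrite leq_eqVlt => /orP[/eqP e|lt].
    by left; exists k.
  by right; rewrite addnS; apply: leq_trans IH; rewrite ltn_add2r.
case: (key n.+1) => [[j ltj ej]|]; last by rewrite addnS ltnNge leq_addl.
have := rank_mpow_prop ej (n - j); by rewrite subnKC.
Qed.

Lemma rank_mpow_nn n (u : 'M[F]_n) : \rank (mpow u (n + n)) = \rank (mpow u n).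
Proof.
suff h : forall i, \rank (mpow u (n + i)) = \rank (mpow u n) by apply: h.
elim=> [|i IH]; first by rewrite addn0.
by rewrite addnS (rank_mpow_prop (rank_mpow_n u) i) IH.
Qed.

End S3.

Section S4.
Variables (F : fieldType) (gT : finGroupType) (G : {group gT}).
Local Notation rep := (mx_representation F G).

Lemma mpow_unit n (u : 'M[F]_n) k : (0 < k)%N -> mpow u k \in unitmx -> u \in unitmx.
Proof. by case: k => // k _; rewrite /= unitmx_mul => /andP[]. Qed.

Lemma fitting n (N : rep n) u :
  mx_indecomposable N -> rhom N N u -> u \in unitmx \/ mpow u n = 0.
Proof.
move=> [n0 hN] hu; set psi := mpow u n.
have hp : rhom N N psi by apply: rhom_mpow.
have modP : mxmodule N psi.
  by apply/mxmoduleP => x Gx; rewrite -hp // submxMl.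
have modK : mxmodule N (kermx psi).
  apply/mxmoduleP => x Gx; rewrite sub_kermx -mulmxA hp // mulmxA.
  by rewrite mulmx_ker mul0mx.
have rk2 : \rank (psi *m psi) = \rank psi by rewrite -mpowD rank_mpow_nn.
have sK2 : (kermx (psi *m psi) <= kermx psi)%MS.
  have s : (kermx psi <= kermx (psi *m psi))%MS.
    by rewrite sub_kermx mulmxA mulmx_ker mul0mx.
  have /eqmxP e : (kermx psi == kermx (psi *m psi))%MS.
    by rewrite -(mxrank_leqif_eq s).2 !mxrank_ker rk2.
  by rewrite -e.
have cap0 : (psi :&: kermx psi)%MS = 0.
  have [z wz] := submxP (capmxSl psi (kermx psi)).
  have w0 : (psi :&: kermx psi)%MS *m psi = 0.
    by apply/eqP; rewrite -sub_kermx capmxSr.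
  have : (z <= kermx (psi *m psi))%MS by rewrite sub_kermx mulmxA -wz w0.
  move/(submx_trans)/(_ sK2); rewrite sub_kermx => /eqP z0.
  by rewrite wz z0.
have full : (psi + kermx psi :=: 1%:M)%MS.
  apply/eqmxP/andP; split; first exact: submx1.
  rewrite sub1mx /row_full mxrank_disjoint_sum // mxrank_ker subnKC //.
  exact: rank_leq_row.
have [p0|K0] := hN psi (kermx psi) modP modK (introT mxdirect_addsP cap0) full.
  by right.
left.
have rf : row_free psi by rewrite -kermx_eq0 K0.
by apply: (mpow_unit n0); rewrite -row_free_unit.
Qed.

Lemma geom n (u : 'M[F]_n) k :
  (1%:M - u) *m \sum_(i < k) mpow u i = 1%:M - mpow u k.
Proof.
elim: k => [|k IH]; first by rewrite big_ord0 mulmx0 /= subrr.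
rewrite big_ord_recr /= mulmxDr IH mulmxBl mul1mx.
by rewrite addrA subrK.
Qed.

Lemma local n (N : rep n) u v :
  mx_indecomposable N -> rhom N N u -> rhom N N v -> u + v = 1%:M ->
  u \in unitmx \/ v \in unitmx.
Proof.
move=> hN hu hv uv; case: (fitting hN hu) => [|nil]; first by left.
right; have ev : v = 1%:M - u by rewrite -uv addrAC subrr add0r.
have := geom u n; rewrite nil subr0 -ev.
by case/mulmx1_unit.
Qed.

Lemma idem_unit n (e : 'M[F]_n) : e *m e = e -> e \in unitmx -> e = 1%:M.
Proof.
move=> ee ue.
by rewrite -[e]mul1mx -(mulVmx ue) -mulmxA ee mulVmx.
Qed.

Lemma indec_rsub_iso w n (W : rep w) (N : rep n) :
  mx_indecomposable W -> mx_indecomposable N -> rsub W N -> riso W N.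
Proof.
move=> hW hN [f [g [hf hg fg]]].
set e := g *m f.
have he : rhom N N e by apply: rhom_mul hg hf.
have ee : e *m e = e by rewrite /e mulmxA -(mulmxA g) fg mulmx1.
have h1e : rhom N N (1%:M - e) by apply: rhom_add; [apply: rhom_1 | apply: rhom_opp].
have sum1 : e + (1%:M - e) = 1%:M by rewrite addrC subrK.
case: (local hN he h1e sum1) => [ue|ue].
  have e1 : g *m f = 1%:M by apply: idem_unit.
  by exists f, g.
have ee' : (1%:M - e) *m (1%:M - e) = 1%:M - e.
  by rewrite mulmxBl mul1mx mulmxBr mulmx1 ee subrr subr0.
have e0 : e = 0.
  by have := idem_unit ee' ue; move/eqP; rewrite subr_eq addrC -subr_eq subrr eq_sym => /eqP.
have f0 : f = 0 by rewrite -[f]mul1mx -fg -mulmxA -/e e0 mulmx0.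
case: hW => w0 _.
have := congr1 (fun M : 'M[F]_w => M (Ordinal w0) (Ordinal w0)) fg.
by rewrite f0 mul0mx !mxE eqxx /= => /eqP; rewrite eq_sym oner_eq0.
Qed.

Lemma exchange w n a b (W : rep w) (N : rep n) (A : rep a) (B : rep b) q1 p1 q2 p2 :
  mx_indecomposable W -> rhom N A q1 -> rhom A N p1 -> rhom N B q2 -> rhom B N p2 ->
  q1 *m p1 + q2 *m p2 = 1%:M -> rsub W N -> rsub W A \/ rsub W B.
Proof.
move=> hW hq1 hp1 hq2 hp2 qp [f [g [hf hg fg]]].
set u := f *m q1 *m p1 *m g; set v := f *m q2 *m p2 *m g.
have hu : rhom W W u by apply: rhom_mul hg; apply: rhom_mul hp1; exact: rhom_mul hf hq1.
have hv : rhom W W v by apply: rhom_mul hg; apply: rhom_mul hp2; exact: rhom_mul hf hq2.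
have uv : u + v = 1%:M.
  have -> : u + v = f *m (q1 *m p1 + q2 *m p2) *m g by rewrite mulmxDr mulmxDl !mulmxA.
  by rewrite qp mulmx1.
case: (local hW hu hv uv) => [uu|uv'].
  left; exists (f *m q1), (p1 *m g *m invmx u); split.
  - exact: rhom_mul hf hq1.
  - by apply: rhom_mul; [apply: rhom_mul hp1 hg | apply: rhom_inv].
  - by rewrite !mulmxA -/u mulmxV.
right; exists (f *m q2), (p2 *m g *m invmx v); split.
- exact: rhom_mul hf hq2.
- by apply: rhom_mul; [apply: rhom_mul hp2 hg | apply: rhom_inv].
- by rewrite !mulmxA -/v mulmxV.
Qed.
End S4.

Section S5.
Variables (F : fieldType) (gT : finGroupType) (G : {group gT}).
Local Notation rep := (mx_representation F G).

Lemma dsum_split a b (A : rep a) (B : rep b) :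
  [/\ rhom (dsum_repr A B) A (col_mx 1%:M 0), rhom A (dsum_repr A B) (row_mx 1%:M 0),
      rhom (dsum_repr A B) B (col_mx 0 1%:M), rhom B (dsum_repr A B) (row_mx 0 1%:M)
    & col_mx 1%:M 0 *m row_mx 1%:M 0 + col_mx 0 1%:M *m row_mx 0 1%:M = 1%:M :> 'M[F]_(a + b)].
Proof.
split; [ move=> x Gx; rewrite ?dsumE ?mul_block_col ?mul_col_mx ?mul_row_block ?mul_mx_row;
  by rewrite ?mulmx1 ?mulmx0 ?mul0mx ?mul1mx ?addr0 ?add0r .. |].
by rewrite !mul_col_row !mulmx0 !mul0mx !mulmx1 add_block_mx !addr0 !add0r -scalar_mx_block.
Qed.

Lemma rsub_dsum_l a b (A : rep a) (B : rep b) : rsub A (dsum_repr A B).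
Proof.
have [h1 h2 _ _ _] := dsum_split A B.
exists (row_mx 1%:M 0), (col_mx 1%:M 0); split => //.
by rewrite mul_row_col mulmx1 mulmx0 addr0.
Qed.

Lemma dsummand_rsub w n (W : rep w) (N : rep n) : is_dsummand W N -> rsub W N.
Proof.
move=> [y [Y h]]; apply: rsub_trans (rsub_dsum_l W Y) _.
exact/riso_sub/riso_sym/rsim_iso.
Qed.

Lemma rsub_dsummand w n (W : rep w) (N : rep n) : rsub W N -> is_dsummand W N.
Proof.
move=> [f [g [hf hg fg]]].
set e := g *m f; set U := 1%:M - e.
have ee : e *m e = e by rewrite /e mulmxA -(mulmxA g) fg mulmx1.
have ce : forall x, x \in G -> N x *m e = e *m N x.
  by move=> x Gx; rewrite /e !mulmxA hg // -[g *m W x *m f]mulmxA hf // mulmxA.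
have cU : forall x, x \in G -> N x *m U = U *m N x.
  by move=> x Gx; rewrite /U mulmxBr mulmxBl mulmx1 mul1mx ce.
have UU : U *m U = U by rewrite /U mulmxBl mul1mx mulmxBr mulmx1 ee subrr subr0.
have modU : mxmodule N U.
  by apply/mxmoduleP => x Gx; rewrite -cU // submxMl.
set Y := submod_repr modU.
set C := in_submod U U.
set V := @val_submod F n U _ 1%:M.
have fU : f *m U = 0 by rewrite /U mulmxBr mulmx1 /e mulmxA fg mul1mx subrr.
have Ug : U *m g = 0 by rewrite /U mulmxBl mul1mx /e -mulmxA fg mulmx1 subrr.
have VU : V *m U = V.
  have [D hD] := submxP (val_submodP (U := U) (1%:M : 'M_(\rank U))).
  by rewrite /V hD -mulmxA UU.
exists (\rank U), Y; apply: riso_rsim.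
exists (row_mx g C), (col_mx f V); split.
- move=> x Gx; rewrite dsumE mul_row_block mul_mx_row !mulmx0 !addr0 !add0r.
  rewrite hg //.
  have -> : C *m Y x = N x *m C.
    change (in_submod U U *m submod_mx modU x = N x *m in_submod U U).
    rewrite -in_submodJ // -cU // [in_submod U (N x *m U)]in_submodE.
    by rewrite -mulmxA -in_submodE.
  by [].
- move=> x Gx; rewrite dsumE mul_block_col mul_col_mx !mul0mx !addr0 !add0r.
  rewrite hf //.
  have -> : Y x *m V = V *m N x.
    have := val_submodJ modU (1%:M : 'M_(\rank U)) Gx.
    by rewrite mul1mx [val_submod (submod_mx _ _)]val_submodE => <-.
  by [].
- have -> : C = U *m in_submod U 1%:M by rewrite /C in_submodE.
  have h : U *m in_submod U 1%:M *m V = U.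
    by rewrite -in_submodE /V -val_submodE in_submodK.
  by rewrite mul_row_col h -/e /U addrC subrK.
- have -> : C = U *m in_submod U 1%:M by rewrite /C in_submodE.
  have h1 : f *m (U *m in_submod U 1%:M) = 0 by rewrite mulmxA fU mul0mx.
  have h2 : V *m g = 0 by rewrite -VU -mulmxA Ug mulmx0.
  have h3 : V *m (U *m in_submod U 1%:M) = 1%:M.
    by rewrite mulmxA VU -in_submodE /V val_submodK.
  by rewrite mul_col_row fg h1 h2 h3 -scalar_mx_block.
Qed.


End S5.

Section S6.
Variables (F : fieldType) (gT : finGroupType) (G : {group gT}).
Local Notation rep := (mx_representation F G).

Definition covered (L : seq {e : nat & rep e}) n (N : rep n) :=
  forall e (W : rep e), mx_indecomposable W -> rsub W N ->
    exists2 s, List.In s L & mx_rsim W (projT2 s).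

Lemma covered_rsub L n n' (N : rep n) (N' : rep n') :
  rsub N N' -> covered L N' -> covered L N.
Proof. by move=> s c e W hW sW; apply: c hW (rsub_trans sW s). Qed.

Lemma covered_iso L n n' (N : rep n) (N' : rep n') :
  riso N N' -> covered L N' -> covered L N.
Proof. by move/riso_sub; apply: covered_rsub. Qed.

Lemma covered_mono L L' n (N : rep n) :
  (forall s, List.In s L -> List.In s L') -> covered L N -> covered L' N.
Proof.
by move=> inc c e W hW sW; have [s /inc sL h] := c e W hW sW; exists s.
Qed.

Lemma covered_split L n a b (N : rep n) (A : rep a) (B : rep b) q1 p1 q2 p2 :
  rhom N A q1 -> rhom A N p1 -> rhom N B q2 -> rhom B N p2 ->
  q1 *m p1 + q2 *m p2 = 1%:M -> covered L A -> covered L B -> covered L N.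
Proof.
move=> h1 h2 h3 h4 qp cA cB e W hW sW.
by case: (exchange hW h1 h2 h3 h4 qp sW) => [/cA|/cB]; apply.
Qed.

Lemma covered_dsum L a b (A : rep a) (B : rep b) :
  covered L A -> covered L B -> covered L (dsum_repr A B).
Proof.
have [h1 h2 h3 h4 qp] := dsum_split A B.
exact: covered_split h1 h2 h3 h4 qp.
Qed.

Lemma covered_zero L n (N : rep n) : n = 0%N -> covered L N.
Proof.
move=> n0 e W [w0 _] [f [g [_ _ fg]]]; subst n.
have f0 : f = 0 by apply/matrixP => i [].
have := congr1 (fun M : 'M[F]_e => M (Ordinal w0) (Ordinal w0)) fg.
by rewrite f0 mul0mx !mxE eqxx /= => /eqP; rewrite eq_sym oner_eq0.
Qed.

Lemma covered_indec n (N : rep n) :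
  mx_indecomposable N -> covered [:: Tagged (fun e => rep e) N] N.
Proof.
move=> hN e W hW sW; exists (Tagged (fun e => rep e) N); first by left.
exact/riso_rsim/indec_rsub_iso.
Qed.

Lemma proj_comm n (N : rep n) U V x :
  mxmodule N U -> mxmodule N V -> (U :&: V = 0)%MS -> (1%:M <= U + V)%MS ->
  x \in G -> N x *m proj_mx U V = proj_mx U V *m N x.
Proof.
move=> mU mV c0 full Gx.
have PQ : proj_mx U V + proj_mx V U = 1%:M.
  by have := add_proj_mx c0 full; rewrite !mul1mx.
have sP : (proj_mx U V <= U)%MS.
  by have := proj_mx_sub U V (1%:M : 'M_n); rewrite mul1mx.
have sQ : (proj_mx V U <= V)%MS.
  by have := proj_mx_sub V U (1%:M : 'M_n); rewrite mul1mx.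
have e1 : proj_mx V U *m N x *m proj_mx U V = 0.
  by rewrite (proj_mx_0 c0) ?(mxmodule_trans mV).
have e2 : proj_mx U V *m N x *m proj_mx U V = proj_mx U V *m N x.
  by rewrite (proj_mx_id c0) ?(mxmodule_trans mU).
transitivity ((proj_mx U V + proj_mx V U) *m N x *m proj_mx U V).
  by rewrite PQ mul1mx.
by rewrite !mulmxDl e1 e2 addr0.
Qed.

Lemma submod_pieces n (N : rep n) U V (mU : mxmodule N U) (mV : mxmodule N V) :
  (U :&: V = 0)%MS -> (1%:M <= U + V)%MS ->
  let q1 := proj_mx U V *m in_submod U 1%:M in
  let p1 := @val_submod F n U _ 1%:M in
  [/\ rhom N (submod_repr mU) q1, rhom (submod_repr mU) N p1, p1 *m q1 = 1%:M
    & q1 *m p1 = proj_mx U V].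
Proof.
move=> c0 full q1 p1.
have sP : (proj_mx U V <= U)%MS.
  by have := proj_mx_sub U V (1%:M : 'M_n); rewrite mul1mx.
split.
- move=> x Gx; rewrite /q1 mulmxA (proj_comm mU mV c0 full Gx) -mulmxA -in_submodE.
  by rewrite in_submodJ // [RHS]mulmxA -in_submodE.
- move=> x Gx; have := val_submodJ mU (1%:M : 'M_(\rank U)) Gx.
  by rewrite mul1mx [val_submod (submod_mx _ _)]val_submodE => <-.
- rewrite /p1 /q1 mulmxA (proj_mx_id c0) ?val_submodP //.
  by rewrite -in_submodE val_submodK.
- by rewrite /q1 /p1 -in_submodE -val_submodE in_submodK.
Qed.

Lemma DI (P : forall n, rep n -> Prop) :
  (forall n (N : rep n), n = 0%N -> P n N) ->
  (forall n (N : rep n), mx_indecomposable N -> P n N) ->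
  (forall n a b (N : rep n) (A : rep a) (B : rep b) q1 p1 q2 p2,
    rhom N A q1 -> rhom A N p1 -> rhom N B q2 -> rhom B N p2 ->
    q1 *m p1 + q2 *m p2 = 1%:M -> rsub A N -> rsub B N -> P a A -> P b B -> P n N) ->
  forall n (N : rep n), P n N.
Proof.
move=> h0 hI hS.
suff H : forall m n (N : rep n), (n < m)%N -> P n N by move=> n N; apply: (H n.+1).
elim=> // m IH n N ltn.
case: (posnP n) => [n0|npos]; first exact: h0.
case: (classic (mx_indecomposable N)) => [hN|nI]; first exact: hI.
have [U [V [mU mV dUV fUV nUV]]] : exists U V : 'M[F]_n,
    [/\ mxmodule N U, mxmodule N V, mxdirect (U + V), (U + V == 1%:M)%MS
      & (U != 0) && (V != 0)].
  apply: NNPP => H; apply: nI; split => // U V mU mV dUV /eqmxP fUV.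
  case: (eqVneq U 0) => [->|nU]; first by left.
  case: (eqVneq V 0) => [->|nV]; first by right.
  by exfalso; apply: H; exists U, V; split => //; rewrite nU nV.
have c0 : (U :&: V = 0)%MS by apply/mxdirect_addsP.
have full : (1%:M <= U + V)%MS by move/eqmxP: fUV => ->.
have c0' : (V :&: U = 0)%MS by rewrite capmxC.
have full' : (1%:M <= V + U)%MS by rewrite addsmxC.
have [hq1 hp1 pq1 qp1] := submod_pieces mU mV c0 full.
have [hq2 hp2 pq2 qp2] := submod_pieces mV mU c0' full'.
have rk : (\rank U + \rank V = n)%N.
  by rewrite -mxrank_disjoint_sum // (eqmxP fUV) mxrank1.
case/andP: nUV => nU nV.
have pU : (0 < \rank U)%N by rewrite lt0n mxrank_eq0.
have pV : (0 < \rank V)%N by rewrite lt0n mxrank_eq0.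
apply: (hS n _ _ N (submod_repr mU) (submod_repr mV) _ _ _ _ hq1 hp1 hq2 hp2).
- rewrite qp1 qp2.
  by have := add_proj_mx c0 full; rewrite !mul1mx.
- by exists (@val_submod F n U _ 1%:M), (proj_mx U V *m in_submod U 1%:M).
- by exists (@val_submod F n V _ 1%:M), (proj_mx V U *m in_submod V 1%:M).
- have ltU : (\rank U < \rank U + \rank V)%N by rewrite -[X in (X < _)%N]addn0 ltn_add2l.
  rewrite rk in ltU; apply: IH; apply: leq_trans ltU _; by rewrite -ltnS.
- have ltV : (\rank V < \rank U + \rank V)%N by rewrite -[X in (X < _)%N]add0n ltn_add2r.
  rewrite rk in ltV; apply: IH; apply: leq_trans ltV _; by rewrite -ltnS.
Qed.

Lemma FC n (N : rep n) : exists L, covered L N.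
Proof.
elim/DI: n / N.
- by move=> n N n0; exists [::]; apply: covered_zero.
- by move=> n N hN; eexists; apply: covered_indec.
- move=> n a b N A B q1 p1 q2 p2 h1 h2 h3 h4 qp _ _ [LA cA] [LB cB].
  exists (LA ++ LB); apply: (covered_split h1 h2 h3 h4 qp).
    by apply: covered_mono cA => s hs; apply: List.in_or_app; left.
  by apply: covered_mono cB => s hs; apply: List.in_or_app; right.
Qed.

End S6.

Section S7.
Variables (F : fieldType) (gT : finGroupType) (G : {group gT}).
Local Notation rep := (mx_representation F G).

Lemma main_lemma d (M : rep d) (hM : mx_indecomposable M) e (X : rep e)
  (hX : mx_algebraic X) (hMM : mx_rsim (tprod_repr M M) (dsum_repr M X)) :
  mx_algebraic M.
Proof.
have [SX hSX] := hX.
have [L1 hL1] : exists L1, forall s, List.In s SX ->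
    covered L1 (tprod_repr (projT2 s) M).
  elim: (SX) => [|s SX' [L1 hL1]]; first by exists [::].
  have [Ls hLs] := FC (tprod_repr (projT2 s) M).
  exists (Ls ++ L1) => t [<-|ht].
    by apply: covered_mono hLs => u hu; apply: List.in_or_app; left.
  by apply: covered_mono (hL1 t ht) => u hu; apply: List.in_or_app; right.
set L := Tagged (fun e => rep e) M :: SX ++ L1.
have inSX : forall s, List.In s SX -> List.In s L.
  by move=> s hs; right; apply: List.in_or_app; left.
have inL1 : forall s, List.In s L1 -> List.In s L.
  by move=> s hs; right; apply: List.in_or_app; right.
have F0 : covered L M.
  by apply: covered_mono (covered_indec hM) => s [<-|[]]; left.
have F1 : forall a, covered L (tpow_repr X a).
  move=> a f W hW sW; have [s hs r] := hSX a f W hW (rsub_dsummand sW).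
  by exists s => //; apply: inSX.
have F2 : forall a, covered L (tprod_repr (tpow_repr X a) M).
  move=> a.
  suff H : forall n (N : rep n), (forall f (W : rep f), mx_indecomposable W ->
      rsub W N -> exists2 s, List.In s SX & mx_rsim W (projT2 s)) ->
      covered L (tprod_repr N M).
    by apply: H => f W hW sW; apply: hSX a f W hW (rsub_dsummand sW).
  move=> n0 N0; elim/DI: n0 / N0 => [n N n0 _ | n N hN hyp |
              n a' b N A B q1 p1 q2 p2 h1 h2 h3 h4 qp sA sB IHA IHB hyp].
  - by apply: covered_zero; rewrite n0.
  - have [s hs r] := hyp n N hN (rsub_refl N).
    apply: covered_iso (riso_tens (rsim_iso r) (riso_refl M)) _.
    by apply: covered_mono (hL1 s hs) => u hu; apply: inL1.
  - apply: (covered_split (rhom_tens h1 (rhom_1 M)) (rhom_tens h2 (rhom_1 M))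
                          (rhom_tens h3 (rhom_1 M)) (rhom_tens h4 (rhom_1 M))).
    + by rewrite -!tens_mx_mul !mulmx1 -tens_mxDl qp tens_mx1.
    + by apply: IHA => f W hW sW; apply: hyp hW (rsub_trans sW sA).
    + by apply: IHB => f W hW sW; apply: hyp hW (rsub_trans sW sB).
have hZX : forall z (Z : rep z) a, rsub Z (tpow_repr X a) ->
    rsub (tprod_repr Z X) (tpow_repr X a.+1).
  move=> z Z a sZ; apply: rsub_trans (rsub_tens sZ (rsub_refl X)) _.
  exact: riso_sub (riso_comm _ _).
pose Q k := covered L (tpow_repr M k) /\
  (forall z (Z : rep z) a, rsub Z (tpow_repr X a) ->
     covered L (tprod_repr Z (tpow_repr M k))).
have Q0 : Q 0%N.
  split => // z Z a sZ.
  exact: covered_rsub (rsub_tens sZ (rsub_refl M)) (F2 a).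
have Q1 : Q 1%N.
  split.
    exact: covered_iso (rsim_iso hMM) (covered_dsum F0 (F1 0%N)).
  move=> z Z a sZ.
  apply: covered_iso (riso_trans (riso_tens (riso_refl Z) (rsim_iso hMM))
                                 (riso_distr _ _ _)) _.
  apply: covered_dsum; first exact: Q0.2 z Z a sZ.
  exact: covered_rsub (hZX z Z a sZ) (F1 a.+1).
have isoT : forall k, riso (tpow_repr M k.+2)
    (dsum_repr (tpow_repr M k.+1) (tprod_repr X (tpow_repr M k))).
  move=> k; apply: riso_trans (riso_assoc M M (tpow_repr M k)) _.
  apply: riso_trans (riso_tens (rsim_iso hMM) (riso_refl _)) _.
  exact: riso_distl.
have QS : forall k, Q k -> Q k.+1 -> Q k.+2.
  move=> k [Qk1 Qk2] [Qk1' Qk2']; split.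
    apply: covered_iso (isoT k) _; apply: covered_dsum Qk1' _.
    exact: Qk2 e X 0%N (rsub_refl X).
  move=> z Z a sZ.
  apply: covered_iso (riso_tens (riso_refl Z) (isoT k)) _.
  apply: covered_iso (riso_distr _ _ _) _.
  apply: covered_dsum; first exact: Qk2' z Z a sZ.
  apply: covered_iso (riso_assoc _ _ _) _.
  exact: Qk2 _ _ a.+1 (hZX z Z a sZ).
have Qall : forall k, Q k /\ Q k.+1.
  elim=> [|k [Qk Qk']]; first by split.
  by split => //; apply: QS.
exists L => n f W hW hds.
exact: (Qall n).1.1 f W hW (dsummand_rsub hds).
Qed.

End S7.

Unset Implicit Arguments.

Theorem mainTheorem9 (F : fieldType) (p : nat) (gT : finGroupType)
  (G : {group gT}) (hp : p \in [pchar F])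
  (d : nat) (M : mx_representation F G d) (hM : mx_indecomposable M)
  (e : nat) (X : mx_representation F G e) (hX : mx_algebraic X)
  (hMM : mx_rsim (tprod_repr M M) (dsum_repr M X)) :
  mx_algebraic M.
Proof. exact: (main_lemma hM hX hMM). Qed.
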